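(* Let $\boldsymbol\beta=(\beta_1,\dots,\beta_N)\in(0,\infty)^N$ and $v\in\mathbb R$ with $\beta_i+v>0$ for all $i$. For any $u_0\in(-\min_i\beta_i,\infty)$ there exist an open disk $U\subset\mathbb C$ containing $u_0$ and constants $C,r>0$ such that for all $u\in U$ and all $\boldsymbol X=(\boldsymbol X_1,\boldsymbol X_2)\in\mathbb R^{2N}$, $$\big|H^{\boldsymbol\beta,u,v}(\boldsymbol X)\big|\le C\exp\Big(-r\Big(\sum_{j=1}^N|X_1(j)|+\sum_{j=1}^N|X_2(j)|\Big)\Big).$$
   Context: For $\theta\in\mathbb C$ let $f_\theta(x)=e^{-\theta x-e^{-x}}$. For $\boldsymbol X_i=(X_i(1),\dots,X_i(N))\in\mathbb R^N$, $i=1,2$, and $u\in\mathbb C$, $$H^{\boldsymbol\beta,u,v}(\boldsymbol X)=\Big(\sum_{j=1}^Ne^{-\sum_{i=j+1}^NX_2(i)-\sum_{i=1}^{j-1}X_1(i)}\Big)^{-(u+v)}\prod_{j=1}^Nf_{\beta_j+v}(X_1(j))f_{\beta_j+u}(X_2(j)),$$ where for $S>0$ and complex $w$, $S^{w}=e^{w\log S}$. *)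

(* Defs.v *)
From Stdlib Require Import Reals.
From Coquelicot Require Import Coquelicot.
Open Scope R_scope.

Definition Cexp (z : C) : C :=
  (exp (Re z) * cos (Im z), exp (Re z) * sin (Im z)).

Definition cpow (S : R) (w : C) : C := Cexp (w * RtoC (ln S)).

Definition ftheta (theta : C) (x : R) : C :=
  Cexp (- (theta * RtoC x) - RtoC (exp (- x))).

Fixpoint Cprod1 (N : nat) (F : nat -> C) : C :=
  match N with
  | O => 1%C
  | S n => (Cprod1 n F * F (S n))%C
  end.

(* H^{beta,u,v}(X1,X2); vectors are indexed 1..N (values elsewhere unused). *)
Definition Hfun (N : nat) (beta : nat -> R) (u : C) (v : R)
    (X1 X2 : nat -> R) : C :=
  (cpow (sum_n_m (fun j => exp (- sum_n_m X2 (S j) N - sum_n_m X1 1 (j - 1))) 1 N)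
        (- (u + RtoC v))
   * Cprod1 N (fun j => ftheta (RtoC (beta j + v)) (X1 j)
                        * ftheta (RtoC (beta j) + u) (X2 j)))%C.

(* Main.v *)
Require Import Defs.
From Stdlib Require Import Reals Lra Lia.
From Coquelicot Require Import Coquelicot.
Open Scope R_scope.

Fixpoint ssum (N : nat) (f : nat -> R) : R :=
  match N with O => 0 | S n => ssum n f + f (S n) end.

Lemma sum1_ssum f N : sum_n_m f 1 N = ssum N f.
Proof.
induction N as [|n IH].
- rewrite sum_n_m_zero; [reflexivity| lia].
- rewrite sum_n_Sm; [|lia]. rewrite IH. reflexivity.
Qed.

Lemma sumS_ssum f j N : (j <= N)%nat -> sum_n_m f (S j) N = ssum N f - ssum j f.
Proof.
intros H. rewrite <- !sum1_ssum.
rewrite (sum_n_m_Chasles f 1 j N); [|lia|lia].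
change (plus ?a ?b) with (Rplus a b). simpl. lra.
Qed.

Lemma ssum_le_rng N f g : (forall i, (1 <= i <= N)%nat -> f i <= g i) -> ssum N f <= ssum N g.
Proof.
induction N as [|n IH]; intros H; simpl. lra.
apply Rplus_le_compat. apply IH; intros; apply H; lia. apply H; lia.
Qed.

Lemma ssum_const N B : ssum N (fun _ => B) = INR N * B.
Proof. induction N as [|n IH]. simpl; ring. cbn [ssum]. rewrite IH, S_INR. ring. Qed.

Lemma ssum_nonneg N f : (forall i, 0 <= f i) -> 0 <= ssum N f.
Proof. intros H; induction N; simpl. lra. specialize (H (S N)); lra. Qed.

Lemma ssum_term N f k : (forall i, 0 <= f i) -> (1 <= k <= N)%nat -> f k <= ssum N f.
Proof.
intros H; induction N as [|n IH]; intros Hk. lia.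
simpl. destruct (Nat.eq_dec k (S n)) as [->|Hne].
- pose proof (ssum_nonneg n f H); lra.
- pose proof (H (S n)); assert (f k <= ssum n f) by (apply IH; lia); lra.
Qed.

Lemma ssum_mono N k f : (forall i, 0 <= f i) -> (k <= N)%nat -> ssum k f <= ssum N f.
Proof.
intros H Hk; induction Hk. lra. simpl. specialize (H (S m)); lra.
Qed.

Lemma ssum_diff N j f g : (forall i, - f i <= g i) -> (j <= N)%nat ->
  - (ssum N f - ssum j f) <= ssum N g - ssum j g.
Proof.
intros H Hk; induction Hk. lra. simpl. specialize (H (S m)); lra.
Qed.

Lemma Cmod_Cexp z : Cmod (Cexp z) = exp (Re z).
Proof.
unfold Cexp, Cmod; cbn [fst snd].
replace ((exp (Re z) * cos (Im z)) ^ 2 + (exp (Re z) * sin (Im z)) ^ 2)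
  with (exp (Re z) ^ 2) by (pose proof (sin2_cos2 (Im z)); unfold Rsqr in *; nra).
apply sqrt_pow2. left; apply exp_pos.
Qed.

Lemma Cmod_prod N F g : (forall j, Cmod (F j) = exp (g j)) ->
  Cmod (Cprod1 N F) = exp (ssum N g).
Proof.
intros H; induction N as [|n IH]; simpl.
- rewrite Cmod_1, exp_0; reflexivity.
- rewrite Cmod_mult, IH, H, exp_plus; reflexivity.
Qed.

Lemma Cmod_H N beta ur ui v X1 X2 :
  Cmod (Hfun N beta (ur, ui) v X1 X2) =
  exp (- (ur + v) * ln (ssum N (fun j => exp (- sum_n_m X2 (S j) N - sum_n_m X1 1 (j - 1))))
       + ssum N (fun j => (- (beta j + v) * X1 j - exp (- X1 j))
                          + (- (beta j + ur) * X2 j - exp (- X2 j)))).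
Proof.
unfold Hfun. rewrite Cmod_mult, exp_plus. f_equal.
- unfold cpow. rewrite Cmod_Cexp, sum1_ssum. f_equal. simpl. ring.
- apply Cmod_prod. intros j. unfold ftheta. rewrite Cmod_mult, !Cmod_Cexp, <- exp_plus.
  f_equal. simpl. ring.
Qed.

Definition nneg (x : R) := Rmax 0 (- x).

Lemma nneg_ge0 x : 0 <= nneg x. Proof. apply Rmax_l. Qed.
Lemma nneg_ge x : - x <= nneg x. Proof. apply Rmax_r. Qed.

Lemma exp_le' x y : x <= y -> exp x <= exp y.
Proof. intros [H|H]. left; apply exp_increasing; auto. subst; lra. Qed.

Lemma coord d M p B x : 0 < d -> d <= p -> p <= M -> 0 <= B -> B <= M ->
  - p * x - exp (- x) + B * nneg x <= (2 * M + d) ^ 2 - d * Rabs x.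
Proof.
intros Hd Hp HpM HB HBM. unfold nneg.
destruct (Rle_or_lt 0 x) as [Hx|Hx].
- rewrite Rabs_right by lra. rewrite Rmax_left by lra.
  pose proof (exp_pos (- x)). nra.
- rewrite Rabs_left by lra. rewrite Rmax_right by lra.
  set (y := - x).
  assert (Hy : 0 < y) by (unfold y; lra).
  assert (He : exp y >= (y/2) ^ 2).
  { replace y with (y/2 + y/2) at 1 by field. rewrite exp_plus.
    pose proof (exp_ineq1 (y/2) ltac:(lra)). nra. }
  replace (- p * x) with (p * y) by (unfold y; ring).
  assert (H1 : p * y <= M * y) by (apply Rmult_le_compat_r; lra).
  assert (H2 : B * y <= M * y) by (apply Rmult_le_compat_r; lra).
  assert (H3 : 0 <= (2 * M + d - y / 2) ^ 2) by apply pow2_ge_0.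
  fold y. nra.
Qed.

Lemma argmin N (f : nat -> R) : (1 <= N)%nat ->
  exists k, (1 <= k <= N)%nat /\ forall i, (1 <= i <= N)%nat -> f k <= f i.
Proof.
induction N as [|n IH]; intros HN. lia.
destruct (Nat.eq_dec n 0) as [->|Hn].
- exists 1%nat. split. lia. intros i Hi. replace i with 1%nat by lia. lra.
- destruct IH as [k [Hk Hmin]]. lia.
  destruct (Rle_or_lt (f k) (f (S n))) as [H|H].
  + exists k. split. lia. intros i Hi. destruct (Nat.eq_dec i (S n)) as [->|Hne]. lra.
    apply Hmin; lia.
  + exists (S n). split. lia. intros i Hi. destruct (Nat.eq_dec i (S n)) as [->|Hne]. lra.
    specialize (Hmin i ltac:(lia)). lra.
Qed.

Lemma ssum_lin5 N (f g h k l : nat -> R) b1 b2 b3 b4 :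
  ssum N (fun i => f i + b1 * g i + b2 * h i + b3 * k i + b4 * l i) =
  ssum N f + b1 * ssum N g + b2 * ssum N h + b3 * ssum N k + b4 * ssum N l.
Proof. induction N as [|n IH]; simpl. ring. rewrite IH. ring. Qed.

Lemma ssum_lin3 N (f g h : nat -> R) b1 b2 :
  ssum N (fun i => f i + b1 * g i + b2 * h i) =
  ssum N f + b1 * ssum N g + b2 * ssum N h.
Proof. induction N as [|n IH]; simpl. ring. rewrite IH. ring. Qed.

Lemma bound_exponent N (beta : nat -> R) v ur (X1 X2 : nat -> R) c d A M :
  (1 <= N)%nat -> 0 <= c <= 1 -> 0 < d -> Rabs (ur + v) <= A -> A <= M ->
  (forall i, (1 <= i <= N)%nat ->
     d <= beta i + v - Rmax 0 (ur + v) * (1 - c) <= M /\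
     d <= beta i + ur - Rmax 0 (ur + v) * c <= M) ->
  - (ur + v) * ln (ssum N (fun j => exp (- sum_n_m X2 (S j) N - sum_n_m X1 1 (j - 1))))
  + ssum N (fun j => (- (beta j + v) * X1 j - exp (- X1 j))
                     + (- (beta j + ur) * X2 j - exp (- X2 j)))
  <= A * ln (INR N) + ssum N (fun _ => 2 * (2 * M + d) ^ 2)
     - d * (ssum N (fun j => Rabs (X1 j)) + ssum N (fun j => Rabs (X2 j))).
Proof.
intros HN Hc Hd HA HAM Hi.
set (T := fun j => exp (- sum_n_m X2 (S j) N - sum_n_m X1 1 (j - 1))).
set (SS := ssum N T).
set (P1 := ssum N (fun i => nneg (X1 i))).
set (P2 := ssum N (fun i => nneg (X2 i))).
set (S1 := ssum N X1). set (S2 := ssum N X2).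
assert (HTpos : forall j, 0 <= T j) by (intros; left; apply exp_pos).
assert (HP1 : 0 <= P1) by (apply ssum_nonneg; intros; apply nneg_ge0).
assert (HP2 : 0 <= P2) by (apply ssum_nonneg; intros; apply nneg_ge0).
assert (HT1 : T 1%nat <= SS) by (apply ssum_term; auto; lia).
assert (HTN : T N <= SS) by (apply ssum_term; auto; lia).
assert (HT1p : 0 < T 1%nat) by apply exp_pos.
assert (HSpos : 0 < SS) by lra.
assert (HNpos : 0 < INR N) by (apply lt_0_INR; lia).
assert (HL1 : ln SS <= ln (INR N) + P1 + P2).
{ assert (HS : SS <= INR N * exp (P1 + P2)).
  { rewrite <- ssum_const. apply ssum_le_rng. intros j Hj. unfold T.
    apply exp_le'. rewrite sumS_ssum by lia. rewrite sum1_ssum.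
    assert (E1 := ssum_diff N j X2 (fun i => nneg (X2 i)) (fun i => nneg_ge _) ltac:(lia)).
    assert (E2 := ssum_diff (j - 1) 0 X1 (fun i => nneg (X1 i)) (fun i => nneg_ge _) ltac:(lia)).
    simpl ssum at 2 4 in E2.
    assert (E3 : ssum (j - 1) (fun i => nneg (X1 i)) <= P1)
      by (apply ssum_mono; [intros; apply nneg_ge0| lia]).
    assert (E4 : 0 <= ssum j (fun i => nneg (X2 i)))
      by (apply ssum_nonneg; intros; apply nneg_ge0).
    fold P2 in E1. lra. }
  apply ln_le in HS; auto. rewrite ln_mult, ln_exp in HS; auto. lra. apply exp_pos. }
assert (HL2 : - ln SS <= S2 + P2).
{ apply ln_le in HT1; auto. unfold T in HT1. rewrite ln_exp in HT1.
  rewrite sumS_ssum in HT1 by lia. rewrite sum1_ssum in HT1. simpl ssum at 2 3 in HT1.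
  assert (nneg (X2 1%nat) <= P2) by (apply (ssum_term N (fun i => nneg (X2 i))); [intros; apply nneg_ge0|lia]).
  pose proof (nneg_ge (X2 1%nat)). fold S2 in HT1. lra. }
assert (HL3 : - ln SS <= S1 + P1).
{ apply ln_le in HTN; [|apply exp_pos]. unfold T in HTN. rewrite ln_exp in HTN.
  rewrite sumS_ssum in HTN by lia. rewrite sum1_ssum in HTN.
  assert (nneg (X1 N) <= P1) by (apply (ssum_term N (fun i => nneg (X1 i))); [intros; apply nneg_ge0|lia]).
  pose proof (nneg_ge (X1 N)).
  assert (ES : S1 = ssum (N - 1) X1 + X1 N).
  { unfold S1. destruct N as [|N']. lia. replace (S N' - 1)%nat with N' by lia. reflexivity. }
  lra. }
assert (HlnN : 0 <= ln (INR N)).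
{ rewrite <- ln_1. apply ln_le. lra. replace 1 with (INR 1) by reflexivity. apply le_INR; lia. }
set (a := ur + v) in *.
set (ap := Rmax 0 a). set (an := Rmax 0 (- a)).
assert (Hap : 0 <= ap) by apply Rmax_l.
assert (Han : 0 <= an) by apply Rmax_l.
assert (Ha : a = ap - an /\ ap + an <= A).
{ unfold ap, an. destruct (Rle_or_lt 0 a).
  - rewrite Rmax_right, Rmax_left by lra. rewrite Rabs_right in HA by lra. lra.
  - rewrite Rmax_left, Rmax_right by lra. rewrite Rabs_left in HA by lra. lra. }
destruct Ha as [Ha HapA].
set (L := ln SS) in *.
assert (HmL : - L <= c * (S2 + P2) + (1 - c) * (S1 + P1)).
{ assert (c * - L <= c * (S2 + P2)) by (apply Rmult_le_compat_l; lra).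
  assert ((1 - c) * - L <= (1 - c) * (S1 + P1)) by (apply Rmult_le_compat_l; lra).
  lra. }
assert (HaL : - a * L <= ap * c * S2 + ap * (1 - c) * S1 + A * P1 + A * P2 + A * ln (INR N)).
{ replace (- a * L) with (ap * - L + an * L) by (rewrite Ha; ring).
  assert (ap * - L <= ap * (c * (S2 + P2) + (1 - c) * (S1 + P1))) by (apply Rmult_le_compat_l; lra).
  assert (an * L <= an * (ln (INR N) + P1 + P2)) by (apply Rmult_le_compat_l; lra).
  assert (ap * c * P2 <= ap * P2) by (rewrite Rmult_assoc; apply Rmult_le_compat_l; nra).
  assert (ap * (1 - c) * P1 <= ap * P1) by (rewrite Rmult_assoc; apply Rmult_le_compat_l; nra).
  assert ((ap + an) * (P1 + P2) <= A * (P1 + P2)) by (apply Rmult_le_compat_r; lra).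
  assert (an * ln (INR N) <= A * ln (INR N)) by (apply Rmult_le_compat_r; lra).
  nra. }
set (g := fun j => (- (beta j + v) * X1 j - exp (- X1 j))
                     + (- (beta j + ur) * X2 j - exp (- X2 j))).
assert (Hsum : ssum N g + ap * (1 - c) * S1 + ap * c * S2 + A * P1 + A * P2
   <= ssum N (fun _ => 2 * (2 * M + d) ^ 2)
      + (- d) * ssum N (fun j => Rabs (X1 j)) + (- d) * ssum N (fun j => Rabs (X2 j))).
{ unfold S1, S2, P1, P2. rewrite <- ssum_lin5, <- ssum_lin3.
  apply ssum_le_rng. intros i Hr. destruct (Hi i Hr) as [H1 H2]. fold a ap in H1, H2.
  pose proof (coord d M _ A (X1 i) Hd (proj1 H1) (proj2 H1) ltac:(apply Rle_trans with (Rabs a); [apply Rabs_pos|auto]) HAM).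
  pose proof (coord d M _ A (X2 i) Hd (proj1 H2) (proj2 H2) ltac:(apply Rle_trans with (Rabs a); [apply Rabs_pos|auto]) HAM).
  unfold g. nra. }
fold g. lra.
Qed.

Theorem lemma3p22 (N : nat) (beta : nat -> R) (v : R)
  (hN : (0 < N)%nat)
  (hbeta : forall i, (1 <= i <= N)%nat -> 0 < beta i)
  (hbv : forall i, (1 <= i <= N)%nat -> 0 < beta i + v)
  (u0 : R)
  (hu0 : forall i, (1 <= i <= N)%nat -> - beta i < u0) :
  exists (c : C) (rho : R), 0 < rho /\ Cmod (RtoC u0 - c) < rho /\
  exists Cst r : R, 0 < Cst /\ 0 < r /\
    forall u : C, Cmod (u - c) < rho ->
    forall X1 X2 : nat -> R,
      Cmod (Hfun N beta u v X1 X2)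
      <= Cst * exp (- r * (sum_n_m (fun j => Rabs (X1 j)) 1 N
                           + sum_n_m (fun j => Rabs (X2 j)) 1 N)).
Proof.
destruct (argmin N beta ltac:(lia)) as [k [Hk Hmin]].
set (al := beta k + v). set (ga := beta k + u0).
assert (Hal : 0 < al) by (apply hbv; auto).
assert (Hga : 0 < ga) by (unfold ga; specialize (hu0 k Hk); lra).
assert (Hbk : 0 < beta k) by (apply hbeta; auto).
set (s := al + ga). set (a0p := Rmax 0 (u0 + v)). set (D := s - a0p).
assert (HD : 0 < D).
{ unfold D, a0p. destruct (Rle_or_lt 0 (u0 + v)).
  rewrite Rmax_right by lra. unfold s, al, ga. lra. rewrite Rmax_left by lra. unfold s; lra. }
assert (Hs : 0 < s) by (unfold s; lra).
set (c := ga / s).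
assert (Hc2 : ga = c * s) by (unfold c; field; lra).
assert (Hc1 : al = (1 - c) * s) by (unfold c, s; field; lra).
assert (Hc0 : 0 < c) by (unfold c; apply Rdiv_lt_0_compat; lra).
assert (Hc1' : 0 < 1 - c) by (apply Rmult_lt_reg_r with s; lra).
set (rho := Rmin 1 (Rmin (D / 2) (c * D / 4))).
set (d := Rmin ((1 - c) * D / 2) (c * D / 4)).
assert (Hrho : 0 < rho).
{ unfold rho. apply Rmin_pos. lra. apply Rmin_pos. lra. apply Rmult_lt_0_compat; [nra|lra]. }
assert (Hd : 0 < d).
{ unfold d. apply Rmin_pos; apply Rmult_lt_0_compat; try lra; nra. }
assert (Hr1 : rho <= 1) by apply Rmin_l.
assert (Hr2 : rho <= D / 2) by (eapply Rle_trans; [apply Rmin_r|apply Rmin_l]).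
assert (Hr3 : rho <= c * D / 4) by (eapply Rle_trans; [apply Rmin_r|apply Rmin_r]).
assert (Hd1 : d <= (1 - c) * D / 2) by apply Rmin_l.
assert (Hd2 : d <= c * D / 4) by apply Rmin_r.
set (A := Rabs u0 + Rabs v + 1).
set (Sb := ssum N (fun j => Rabs (beta j))).
assert (HSb : 0 <= Sb) by (apply ssum_nonneg; intros; apply Rabs_pos).
set (M := Sb + 2 * A).
exists (RtoC u0), rho. split. auto. split.
{ replace (RtoC u0 - RtoC u0)%C with (RtoC 0).
  unfold Cmod; simpl. replace (0 * (0 * 1) + 0 * (0 * 1)) with 0 by ring. rewrite sqrt_0. lra.
  apply injective_projections; simpl; ring. }
exists (exp (A * ln (INR N) + ssum N (fun _ => 2 * (2 * M + d) ^ 2))), d.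
split. apply exp_pos. split. auto.
intros [ur ui] Hu X1 X2.
assert (Hur : Rabs (ur - u0) < rho).
{ eapply Rle_lt_trans; [|apply Hu]. eapply Rle_trans; [|apply re_le_Cmod]. simpl. right. f_equal; ring. }
rewrite Cmod_H, !sum1_ssum, <- exp_plus. apply exp_le'.
assert (HB := bound_exponent N beta v ur X1 X2 c d A M ltac:(lia)).
assert (Hur2 : u0 - rho < ur < u0 + rho) by (apply Rabs_def2 in Hur; lra).
assert (HAur : Rabs ur <= Rabs u0 + 1).
{ replace ur with (u0 + (ur - u0)) by ring. eapply Rle_trans; [apply Rabs_triang|]. lra. }
assert (HA : Rabs (ur + v) <= A).
{ eapply Rle_trans; [apply Rabs_triang|]. unfold A; lra. }
assert (HAM : A <= M) by (unfold M, A; pose proof (Rabs_pos u0); pose proof (Rabs_pos v); lra).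
set (ap := Rmax 0 (ur + v)) in HB.
assert (Hap0 : 0 <= ap) by apply Rmax_l.
assert (Hap : ap <= a0p + rho).
{ unfold ap, a0p. destruct (Rle_or_lt 0 (ur + v)).
  - rewrite Rmax_right by lra. pose proof (Rmax_r 0 (u0 + v)). lra.
  - rewrite Rmax_left by lra. pose proof (Rmax_l 0 (u0 + v)). lra. }
assert (Hi : forall i, (1 <= i <= N)%nat ->
     d <= beta i + v - ap * (1 - c) <= M /\
     d <= beta i + ur - ap * c <= M).
{ intros i Hi. specialize (Hmin i Hi).
  assert (Hbi : beta i <= Sb).
  { eapply Rle_trans; [apply Rle_abs|]. apply (ssum_term N (fun j => Rabs (beta j))); auto.
    intros; apply Rabs_pos. }
  assert (E1 : ap * (1 - c) <= (a0p + rho) * (1 - c)) by (apply Rmult_le_compat_r; lra).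
  assert (E2 : ap * c <= (a0p + rho) * c) by (apply Rmult_le_compat_r; lra).
  assert (E3 : (1 - c) * (D / 2) <= (1 - c) * (D - rho)) by (apply Rmult_le_compat_l; lra).
  assert (E4 : c * (D / 2) <= c * (D - rho)) by (apply Rmult_le_compat_l; lra).
  assert (E5 : 0 <= ap * (1 - c)) by (apply Rmult_le_pos; lra).
  assert (E6 : 0 <= ap * c) by (apply Rmult_le_pos; lra).
  assert (Ev : v <= Rabs v) by apply Rle_abs. pose proof (Rabs_pos u0). pose proof (Rabs_pos v).
  assert (Eu : ur <= Rabs ur) by apply Rle_abs.
  assert (ED : D = s - a0p) by reflexivity.
  unfold M, A. unfold al, ga in Hc1, Hc2.
  assert (F1 : (a0p + rho) * (1 - c) = (1-c)*s - (1-c)*(D - rho)) by (rewrite ED; ring).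
  assert (F2 : (a0p + rho) * c = c*s - c*(D - rho)) by (rewrite ED; ring).
  split; split; [lra|lra|lra|lra]. }
specialize (HB ltac:(lra) Hd HA HAM Hi). lra.
Qed.
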